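(* Let $u$ be the root of $P_{(1,3)}^{(1)}$ and $v$ the root of $P_{(2,1)}^{(2)}$, as described in the context. Then $$t_{\left (P_{(1,3)}^{(1)},u\right )}(\lambda )<t_{\left (P_{(2,1)}^{(2)},v\right )}(\lambda )\quad\mbox{for all }\lambda >2.$$
   Context: For a graph $G$, $\phi_G(\lambda)=\det(\lambda I-A(G))$ denotes its characteristic polynomial, where $A(G)$ is the adjacency matrix. For $\lambda>2$, let $x_1=\frac{\lambda-\sqrt{\lambda^2-4}}{2}$ and $x_2=\frac{\lambda+\sqrt{\lambda^2-4}}{2}$ be the two roots of $x^2-\lambda x+1=0$ (so $x_1+x_2=\lambda$, $x_1x_2=1$, $x_1<1<x_2$). For a rooted graph $(G,v)$ (a graph $G$ with a designated vertex $v$), the functions $p_{(G,v)}$ and $q_{(G,v)}$ are defined by $\phi_G=p_{(G,v)}+q_{(G,v)}$ and $\phi_{G-v}=x_2p_{(G,v)}+x_1q_{(G,v)}$, where $G-v$ is $G$ with vertex $v$ deleted, and $t_{(G,v)}:=q_{(G,v)}/p_{(G,v)}$. The graph $P_{(1,3)}^{(1)}$ is the tree with exactly one vertex of degree $3$ from which three pendent paths of lengths $1$, $1$ and $3$ emanate (6 vertices); its root $u$ is the vertex on the length-$3$ path at distance $2$ from the degree-$3$ vertex (i.e. the neighbour of that path's endpoint). The graph $P_{(2,1)}^{(2)}$ is the tree with exactly one vertex of degree $3$ from which three pendent paths of lengths $2$, $2$ and $1$ emanate (6 vertices); its root $v$ is the endpoint of the length-$1$ path. *)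

(* Defs.v *)
From HB Require Import structures.
From mathcomp Require Import all_boot all_order all_algebra.
From mathcomp Require Import reals.
Set Implicit Arguments. Unset Strict Implicit. Unset Printing Implicit Defensive.
Import Order.TTheory GRing.Theory Num.Theory.
Local Open Scope ring_scope.

Definition edge_of (n : nat) (s : seq (nat * nat)) (i j : 'I_n) : bool :=
  ((nat_of_ord i, nat_of_ord j) \in s) || ((nat_of_ord j, nat_of_ord i) \in s).

Definition adj_mx (R : nzRingType) (n : nat) (s : seq (nat * nat)) : 'M[R]_n :=
  \matrix_(i, j) (edge_of s i j)%:R.

Definition phi (R : comNzRingType) (n : nat) (A : 'M[R]_n) (l : R) : R :=
  (char_poly A).[l].

Definition del_vtx (R : Type) (n : nat) (A : 'M[R]_n.+1) (v : 'I_n.+1) : 'M[R]_n :=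
  row' v (col' v A).

Section Rooted.
Variable R : realType.

Definition x1 (l : R) : R := (l - Num.sqrt (l ^+ 2 - 4)) / 2.
Definition x2 (l : R) : R := (l + Num.sqrt (l ^+ 2 - 4)) / 2.

(* p, q : the unique solution of  phi_G = p + q,  phi_{G-v} = x2 p + x1 q
   (unique for l > 2 since x1 <> x2). *)
Definition p_rt (n : nat) (A : 'M[R]_n.+1) (v : 'I_n.+1) (l : R) : R :=
  (phi (del_vtx A v) l - x1 l * phi A l) / (x2 l - x1 l).
Definition q_rt (n : nat) (A : 'M[R]_n.+1) (v : 'I_n.+1) (l : R) : R :=
  (x2 l * phi A l - phi (del_vtx A v) l) / (x2 l - x1 l).
Definition t_rt (n : nat) (A : 'M[R]_n.+1) (v : 'I_n.+1) (l : R) : R :=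
  q_rt A v l / p_rt A v l.
End Rooted.

(* P_{(1,3)}^{(1)}: centre 0; pendent paths 0-1, 0-2, 0-3-4-5; root u = 4. *)
Definition P13_1_edges : seq (nat * nat) := [:: (0,1); (0,2); (0,3); (3,4); (4,5)]%N.
Definition P13_1 (R : realType) : 'M[R]_6 := adj_mx R 6 P13_1_edges.
Definition root_u : 'I_6 := inord 4.

(* P_{(2,1)}^{(2)}: centre 0; pendent paths 0-1-2, 0-3-4, 0-5; root v = 5. *)
Definition P21_2_edges : seq (nat * nat) := [:: (0,1); (1,2); (0,3); (3,4); (0,5)]%N.
Definition P21_2 (R : realType) : 'M[R]_6 := adj_mx R 6 P21_2_edges.
Definition root_v : 'I_6 := inord 5.

(* Main.v *)
Require Import Defs.
From mathcomp Require Import all_boot all_order all_algebra reals ring lra.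
Import Order.TTheory GRing.Theory Num.Theory.
Local Open Scope ring_scope.

Definition a13 (i j : nat) : bool :=
  match i, j with
  | 0,1 | 1,0 | 0,2 | 2,0 | 0,3 | 3,0 | 3,4 | 4,3 | 4,5 | 5,4 => true
  | _,_ => false end%N.

Lemma a13E (i j : 'I_6) : edge_of P13_1_edges i j = a13 i j.
Proof.
case: i j => [i Hi] [j Hj]; rewrite /edge_of /=.
by case: i Hi => [|[|[|[|[|[|i]]]]]] Hi; case: j Hj => [|[|[|[|[|[|j]]]]]] Hj.
Qed.

Lemma phi_det (R : realType) n (A : 'M[R]_n) l :
  phi A l = \det (\matrix_(i,j) (l *+ (nat_of_ord i == nat_of_ord j) - A i j)).
Proof.
rewrite /phi /char_poly.
have -> : forall p : {poly R}, p.[l] = horner_eval l p by [].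
rewrite -det_map_mx; congr (\det _).
apply/matrixP => i j; rewrite !mxE /= !horner_evalE.
by rewrite hornerD hornerN hornerMn hornerX hornerC.
Qed.

Definition M_of (R : Type) n (F : nat -> nat -> R) : 'M[R]_n := \matrix_(i, j) F i j.
Arguments M_of {R} n F : simpl never.

Lemma phi_adj (R : realType) n s (a : nat -> nat -> bool)
  (H : forall i j : 'I_n, edge_of s i j = a i j) l :
  phi (adj_mx R n s) l = \det (M_of n (fun p q => l *+ (p == q)%N - (a p q)%:R)).
Proof. rewrite phi_det; congr (\det _); apply/matrixP => i j; by rewrite !mxE H. Qed.

Lemma expand0 (R : comPzRingType) n (F : nat -> nat -> R) :
  \det (M_of n.+1 F) =
  \sum_(j < n.+1) F 0%N j * ((-1) ^+ j * \det (M_of n (fun i k => F i.+1 (bump j k)))).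
Proof.
rewrite (expand_det_row _ ord0); apply: eq_bigr => j _.
rewrite /cofactor !mxE add0n; congr (_ * (_ * \det _)).
by apply/matrixP => i k; rewrite !mxE.
Qed.

Lemma det_M0 (R : comPzRingType) (F : nat -> nat -> R) : \det (M_of 0 F) = 1.
Proof. exact: det_mx00. Qed.

Definition a21 (i j : nat) : bool :=
  match i, j with
  | 0,1 | 1,0 | 1,2 | 2,1 | 0,3 | 3,0 | 3,4 | 4,3 | 0,5 | 5,0 => true
  | _,_ => false end%N.

Lemma a21E (i j : 'I_6) : edge_of P21_2_edges i j = a21 i j.
Proof.
case: i j => [i Hi] [j Hj]; rewrite /edge_of /=.
by case: i Hi => [|[|[|[|[|[|i]]]]]] Hi; case: j Hj => [|[|[|[|[|[|j]]]]]] Hj.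
Qed.

Lemma phi_del (R : realType) n s (a : nat -> nat -> bool)
  (H : forall i j : 'I_n.+1, edge_of s i j = a i j) v k (hv : nat_of_ord v = k) l :
  phi (del_vtx (adj_mx R n.+1 s) v) l =
  \det (M_of n (fun p q => l *+ (p == q)%N - (a (bump k p) (bump k q))%:R)).
Proof. rewrite phi_det; congr (\det _); apply/matrixP => i j; by rewrite !mxE H /= hv. Qed.

Ltac simpl_e := rewrite /= ?mulr0n ?mulr1n ?subr0 ?sub0r ?subrr ?mul0r ?mulr0 ?add0r ?addr0.
Ltac lvl := rewrite !expand0 !big_ord_recl !big_ord0; simpl_e.

Lemma phi13 (R : realType) l : phi (P13_1 R) l = l^+6 - 5 * l^+4 + 5 * l^+2.
Proof.
rewrite /P13_1 (@phi_adj R 6 _ _ a13E).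
do 6 lvl; rewrite !det_M0; ring.
Qed.

Lemma phi21 (R : realType) l : phi (P21_2 R) l = l^+6 - 5 * l^+4 + 5 * l^+2 - 1.
Proof.
rewrite /P21_2 (@phi_adj R 6 _ _ a21E).
do 6 lvl; rewrite !det_M0; ring.
Qed.

Lemma phi13d (R : realType) l : phi (del_vtx (P13_1 R) root_u) l = l^+5 - 3 * l^+3.
Proof.
have hv : nat_of_ord root_u = 4%N by rewrite /root_u inordK.
rewrite /P13_1 (@phi_del R 5 _ _ a13E _ _ hv).
do 5 lvl; rewrite !det_M0; ring.
Qed.

Lemma phi21d (R : realType) l : phi (del_vtx (P21_2 R) root_v) l = l^+5 - 4 * l^+3 + 3 * l.
Proof.
have hv : nat_of_ord root_v = 5%N by rewrite /root_v inordK.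
rewrite /P21_2 (@phi_del R 5 _ _ a21E _ _ hv).
do 5 lvl; rewrite !det_M0; ring.
Qed.

Lemma key (R : realFieldType) (l y x : R) : 2 < l -> y * x = 1 -> y + x = l ->
  0 < y -> y < 1 -> y < x ->
  ((x * (l^+6 - 5 * l^+4 + 5 * l^+2) - (l^+5 - 3 * l^+3)) / (x - y)) /
  (((l^+5 - 3 * l^+3) - y * (l^+6 - 5 * l^+4 + 5 * l^+2)) / (x - y)) <
  ((x * (l^+6 - 5 * l^+4 + 5 * l^+2 - 1) - (l^+5 - 4 * l^+3 + 3 * l)) / (x - y)) /
  (((l^+5 - 4 * l^+3 + 3 * l) - y * (l^+6 - 5 * l^+4 + 5 * l^+2 - 1)) / (x - y)).
Proof.
move=> hl hyx hl' hy0 hy1 hyx'.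
have hD : x - y != 0 by rewrite subr_eq0 gt_eqF.
set a1 := l^+6 - 5 * l^+4 + 5 * l^+2; set b1 := l^+5 - 3 * l^+3.
set a2 := a1 - 1; set b2 := l^+5 - 4 * l^+3 + 3 * l.
have hy : y != 0 by rewrite gt_eqF.
have hx : x = y^-1 by apply: (mulfI hy); rewrite mulfV.
have hP1 : 0 < b1 - y * a1.
  have -> : b1 - y * a1 = (y^+4 + y^+6 + y^+8 + 2 * y^+10 - y^+14) / y^+7.
    by rewrite /b1 /a1 -hl' hx; field.
  apply: divr_gt0; last exact: exprn_gt0.
  have h10 : y^+10 < 1 by rewrite exprn_ilt1 // ltW.
  have h4 : 0 < y^+4 by exact: exprn_gt0.
  have -> : y^+14 = y^+4 * y^+10 by rewrite -exprD.
  have : 0 <= y^+6 + y^+8 + 2 * y^+10.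
    by rewrite !addr_ge0 ?mulr_ge0 ?exprn_ge0 ?ltW.
  nra.
have hP2 : 0 < b2 - y * a2.
  have -> : b2 - y * a2 = (y^+6 + 2 * y^+8 + y^+10 - y^+14) / y^+7.
    by rewrite /b2 /a2 /a1 -hl' hx; field.
  apply: divr_gt0; last exact: exprn_gt0.
  have h8 : y^+8 < 1 by rewrite exprn_ilt1 // ltW.
  have h6 : 0 < y^+6 by exact: exprn_gt0.
  have -> : y^+14 = y^+6 * y^+8 by rewrite -exprD.
  have : 0 <= 2 * y^+8 + y^+10.
    by rewrite !addr_ge0 ?mulr_ge0 ?exprn_ge0 ?ltW.
  nra.
have hA : 0 < a2 * b1 - a1 * b2.
  have -> : a2 * b1 - a1 * b2 = l * l^+2 * (l^+2 - 1) * (l^+2 - 3) * (l^+2 - 4).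
    by rewrite /a2 /a1 /b1 /b2; ring.
  have hL : 4 < l^+2 by nra.
  rewrite !mulr_gt0 // ?subr_gt0 //; try lra.
have hq : forall Q P : R, (Q / (x - y)) / (P / (x - y)) = Q / P.
  by move=> Q P; rewrite invf_div mulrA divfK.
rewrite !hq ltr_pdivrMr // mulrAC ltr_pdivlMr //.
rewrite -subr_gt0.
have -> : (x * a2 - b2) * (b1 - y * a1) - (x * a1 - b1) * (b2 - y * a2) =
  (x - y) * (a2 * b1 - a1 * b2) by ring.
by rewrite mulr_gt0 // subr_gt0.
Qed.

Theorem lemma2p9 (R : realType) (l : R) :
  2 < l -> t_rt (P13_1 R) root_u l < t_rt (P21_2 R) root_v l.
Proof.
move=> hl.
rewrite /t_rt /p_rt /q_rt phi13 phi13d phi21 phi21d.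
have h4 : 0 <= l^+2 - 4 by nra.
have hs2 := sqr_sqrtr h4.
have hs0 : 0 < Num.sqrt (l^+2 - 4) by rewrite sqrtr_gt0; nra.
move: hs2 hs0; rewrite /x1 /x2; set s := Num.sqrt _ => hs2 hs0.
have hp : (l - s) * (l + s) = 4 by rewrite -subr_sqr hs2; ring.
have hls : s < l.
  have : 0 < l + s by lra.
  nra.
have hl2 : l - 2 < s.
  have : 0 < l - 2 + s by lra.
  nra.
apply: key => //.
- have -> : (l - s) / 2 * ((l + s) / 2) = (l^+2 - s^+2) / 4 by field.
  by rewrite hs2; field.
- field.
- lra.
- lra.
- lra.
- lra.
Qed.
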